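(* Let $N\ge 2$ and $R\ge N+1$ be integers. There is a set $\mathcal{F}$ of flows in the Clos network $C_{N,R}$, each with demand $1$ or $\tfrac12$ (and satisfying the demand assumption below), such that $OPT(\mathcal{F})=\tfrac32$.
   Context: Clos network $C_{N,R}$: a directed graph with $N$ middle switches $M_1,\dots,M_N$, $R$ input switches $I_1,\dots,I_R$, $R$ output switches $O_1,\dots,O_R$, source servers $s_i^k$ and destination servers $t_i^k$ ($i\in[R]$, $k\in[N]$), and edges $s_i^kI_i$, $I_iM_m$, $M_mO_i$, $O_it_i^k$ for all $i\in[R]$, $m,k\in[N]$; all links have capacity $1$. A flow $f$ has a source server $s(f)$ of input switch $I_{i(f)}$, a destination server $t(f)$ of output switch $O_{j(f)}$, and a positive demand $\mathrm{dem}(f)$. A set of flows must satisfy: the total demand of flows leaving any source server is at most $1$, and the total demand of flows entering any destination server is at most $1$. A routing $r$ assigns each flow a single middle switch $r(f)\in[N]$. The congestion of $r$ is $\max_{i\in[R],m\in[N]}\max\{\sum_{f:i(f)=i,r(f)=m}\mathrm{dem}(f),\ \sum_{f:j(f)=i,r(f)=m}\mathrm{dem}(f)\}$, and $OPT(\mathcal{F})$ is the minimum congestion over all routings of $\mathcal{F}$. *)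

(* Defs.v *)
From HB Require Import structures.
From mathcomp Require Import all_boot all_order all_algebra.
Set Implicit Arguments. Unset Strict Implicit. Unset Printing Implicit Defensive.
Import Order.TTheory GRing.Theory Num.Theory.
Local Open Scope ring_scope.

(* A flow in C_{N,R}: source server s_{i(f)}^{k} of input switch I_{i(f)},
   destination server t_{j(f)}^{k'} of output switch O_{j(f)}, demand. *)
Record flow (N R : nat) := Flow {
  fin  : 'I_R;
  fsrv : 'I_N;
  fout : 'I_R;
  fdst : 'I_N;
  dem  : rat
}.

(* A set of flows is a finite family indexed by 'I_m (flows may share
   endpoints; they are distinct as elements of the family). *)
Definition valid_flows (N R m : nat) (F : 'I_m -> flow N R) : Prop :=
  (forall f, 0 < dem (F f)) /\
  (forall (i : 'I_R) (k : 'I_N),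
      \sum_(f | (fin (F f) == i) && (fsrv (F f) == k)) dem (F f) <= 1) /\
  (forall (i : 'I_R) (k : 'I_N),
      \sum_(f | (fout (F f) == i) && (fdst (F f) == k)) dem (F f) <= 1).

(* A routing assigns each flow a middle switch. *)
Definition routing (N m : nat) := {ffun 'I_m -> 'I_N}.

Definition load_in (N R m : nat) (F : 'I_m -> flow N R) (r : routing N m)
  (i : 'I_R) (mm : 'I_N) : rat :=
  \sum_(f | (fin (F f) == i) && (r f == mm)) dem (F f).

Definition load_out (N R m : nat) (F : 'I_m -> flow N R) (r : routing N m)
  (i : 'I_R) (mm : 'I_N) : rat :=
  \sum_(f | (fout (F f) == i) && (r f == mm)) dem (F f).

(* congestion = max over i, m of max(load on I_i M_m, load on M_m O_i);
   loads are nonnegative for positive demands, so folding max from 0 is the max. *)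
Definition congestion (N R m : nat) (F : 'I_m -> flow N R) (r : routing N m) : rat :=
  \big[Num.max/0]_(i : 'I_R) \big[Num.max/0]_(mm : 'I_N)
     Num.max (load_in F r i mm) (load_out F r i mm).

Definition OPT (N R m : nat) (F : 'I_m -> flow N R) : rat :=
  match [pick r : routing N m] with
  | Some r0 => \big[Num.min/congestion F r0]_(r : routing N m) congestion F r
  | None => 0
  end.

(* Main.v *)
Require Import Defs.
From HB Require Import structures.
From mathcomp Require Import all_boot all_order all_algebra.
From mathcomp Require Import zify ring lra.
Set Implicit Arguments. Unset Strict Implicit. Unset Printing Implicit Defensive.
Import Order.TTheory GRing.Theory Num.Theory.
Local Open Scope ring_scope.

Definition pk (k : nat) : nat := if k == 0%N then 1%N else 0%N.
Definition sx (k t : nat) : nat := if (t < pk k)%N then t else t.+1.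

Ltac natt := rewrite /sx /pk; repeat match goal with |- context [if ?b then _ else _] => case: (boolP b) end; move=> *; lia.

Lemma pk_neq k : pk k <> k. Proof. natt. Qed.
Lemma pk_le1 k : (pk k <= 1)%N. Proof. natt. Qed.
Lemma sx_neq k t : sx k t <> pk k. Proof. natt. Qed.
Lemma sx_inj k t1 t2 : sx k t1 = sx k t2 -> t1 = t2. Proof. natt. Qed.
Lemma sx_le k t : (sx k t <= t.+1)%N. Proof. natt. Qed.

Definition TT (n : nat) : finType :=
  (('I_n.+2 + ('I_n.+2 * 'I_n.+1)) + ('I_n.+2 + 'I_n.+1))%type.

Definition fin_n n (t : TT n) : nat :=
  match t with
  | inl (inl k) => 0 | inl (inr (k, _)) => k.+1
  | inr (inl k) => k.+1 | inr (inr k) => k.+1 end.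
Definition srv_n n (t : TT n) : nat :=
  match t with
  | inl (inl k) => k | inl (inr (k, t)) => sx k t
  | inr (inl k) => pk k | inr (inr k) => pk k end.
Definition out_n n (t : TT n) : nat :=
  match t with
  | inl (inl k) => k | inl (inr (k, t)) => if sx k t == k then n.+2 else k
  | inr (inl k) => k | inr (inr k) => k.+1 end.
Definition dst_n n (t : TT n) : nat :=
  match t with
  | inl (inl k) => k | inl (inr (k, t)) => sx k t
  | inr (inl k) => pk k | inr (inr k) => pk k.+1 end.
Definition dem_n n (t : TT n) : rat :=
  match t with
  | inl _ => 1 | inr _ => 1/2 end.

Definition G n r (t : TT n) : flow n.+2 r.+1 :=
  Flow (inord (fin_n t)) (inord (srv_n t)) (inord (out_n t)) (inord (dst_n t)) (dem_n t).
Definition rho0 n (t : TT n) : 'I_n.+2 := inord (srv_n t).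

Lemma fin_lt n (t : TT n) : (fin_n t <= n.+2)%N.
Proof. case: t => [[k|[k t]]|[k|k]] /=; have := ltn_ord k; lia. Qed.
Lemma out_lt n (t : TT n) : (out_n t <= n.+2)%N.
Proof. case: t => [[k|[k t]]|[k|k]] /=; have := ltn_ord k; try case: ifP; lia. Qed.
Lemma srv_lt n (t : TT n) : (srv_n t < n.+2)%N.
Proof.
case: t => [[k|[k t]]|[k|k]] /=; have := ltn_ord k; have := pk_le1 k;
  try (have := sx_le k t; have := ltn_ord t); lia.
Qed.
Lemma dst_lt n (t : TT n) : (dst_n t < n.+2)%N.
Proof.
case: t => [[k|[k t]]|[k|k]] /=; have := ltn_ord k; have := pk_le1 k;
  try (have := pk_le1 k.+1); try (have := sx_le k t; have := ltn_ord t); lia.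
Qed.


Lemma fin_eq n r (hR : (n.+3 <= r.+1)%N) (t : TT n) (i : 'I_r.+1) :
  (fin (G r t) == i) = (fin_n t == i :> nat).
Proof. by rewrite -val_eqE /= inordK //; have := fin_lt t; lia. Qed.
Lemma out_eq n r (hR : (n.+3 <= r.+1)%N) (t : TT n) (i : 'I_r.+1) :
  (fout (G r t) == i) = (out_n t == i :> nat).
Proof. by rewrite -val_eqE /= inordK //; have := out_lt t; lia. Qed.
Lemma srv_eq n r (t : TT n) (i : 'I_n.+2) :
  (fsrv (G r t) == i) = (srv_n t == i :> nat).
Proof. by rewrite -val_eqE /= inordK // srv_lt. Qed.
Lemma dst_eq n r (t : TT n) (i : 'I_n.+2) :
  (fdst (G r t) == i) = (dst_n t == i :> nat).
Proof. by rewrite -val_eqE /= inordK // dst_lt. Qed.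
Lemma rho_eq n (t : TT n) (i : 'I_n.+2) :
  (rho0 t == i) = (srv_n t == i :> nat).
Proof. by rewrite -val_eqE /= inordK // srv_lt. Qed.

Lemma sumT n (P : pred (TT n)) (H : TT n -> rat) :
  \sum_(i < #|TT n| | P (enum_val i)) H (enum_val i) = \sum_(t | P t) H t.
Proof. by rewrite -big_enum_val_cond; apply: eq_bigl => t; rewrite inE. Qed.

Lemma sum4 n (P : pred (TT n)) (H : TT n -> rat) :
  \sum_(t | P t) H t =
  (\sum_(k | P (inl (inl k))) H (inl (inl k)) + \sum_(p | P (inl (inr p))) H (inl (inr p)))
  + (\sum_(k | P (inr (inl k))) H (inr (inl k)) + \sum_(k | P (inr (inr k))) H (inr (inr k))).
Proof. by rewrite !big_sumType. Qed.

Lemma sum_key (T : finType) (K : T -> nat * nat) (c : nat * nat) (F : T -> rat) (d : rat) :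
  injective K -> (forall x, K x = c -> F x <= d) -> 0 <= d ->
  \sum_(x | K x == c) F x <= d.
Proof.
move=> Kinj H d0; case: (pickP (fun x => K x == c)) => [x0 /eqP Kx0|none].
- rewrite (bigD1 x0) /=; last by rewrite Kx0.
  rewrite big1 ?addr0; first exact: H.
  move=> y /andP[/eqP Ky ne]; move: ne.
  by rewrite (Kinj y x0 (etrans Ky (esym Kx0))) eqxx.
- by rewrite big_pred0.
Qed.

Definition keyIn n (t : TT n) := (fin_n t, srv_n t).
Definition keyOut n (t : TT n) := (out_n t, srv_n t).
Definition keyDst n (t : TT n) := (out_n t, dst_n t).

Lemma sum_key0 (T : finType) (K : T -> nat * nat) (c : nat * nat) (F : T -> rat) :
  injective K -> (forall x, K x = c -> False) -> \sum_(x | K x == c) F x <= 0.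
Proof. by move=> Ki H; rewrite big_pred0 // => x; apply/negP => /eqP /H. Qed.
Lemma sum_keyL (T : finType) (K : T -> nat * nat) (c : nat * nat) (F : T -> rat) :
  injective K -> (forall x, F x = 1) -> \sum_(x | K x == c) F x <= 1.
Proof. move=> Ki H; apply: (sum_key Ki); [move=> x _; rewrite H; exact: lexx|exact: ler01]. Qed.
Lemma half_ge0 : 0 <= 1/2 :> rat. Proof. lra. Qed.
Lemma sum_keyR (T : finType) (K : T -> nat * nat) (c : nat * nat) (F : T -> rat) :
  injective K -> (forall x, F x = 1/2) -> \sum_(x | K x == c) F x <= 1/2.
Proof. move=> Ki H; apply: (sum_key Ki); [move=> x _; rewrite H; exact: lexx|exact: half_ge0]. Qed.
Lemma dem_l n z : dem_n (inl z : TT n) = 1. Proof. reflexivity. Qed.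
Lemma dem_r n z : dem_n (inr z : TT n) = 1/2. Proof. reflexivity. Qed.

Lemma le4 (x1 x2 x3 x4 a b c d e : rat) :
  x1 <= a -> x2 <= b -> x3 <= c -> x4 <= d -> a + b + (c + d) <= e ->
  x1 + x2 + (x3 + x4) <= e.
Proof. move=> h1 h2 h3 h4; apply: le_trans; by rewrite !lerD. Qed.

Lemma sumIn n (c : nat * nat) : \sum_(t : TT n | keyIn t == c) dem_n t <= 1.
Proof.
rewrite sum4; case: c => i s.
have iu : injective (fun k : 'I_n.+2 => keyIn (inl (inl k) : TT n)).
  by move=> k1 k2 [e]; apply: val_inj.
have ix : injective (fun p : 'I_n.+2 * 'I_n.+1 => keyIn (inl (inr p) : TT n)).
  move=> [k1 t1] [k2 t2] [e1 e2].
  have ek : k1 = k2 by apply: val_inj.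
  by subst k2; rewrite (val_inj (sx_inj e2)).
have ia : injective (fun k : 'I_n.+2 => keyIn (inr (inl k) : TT n)).
  by move=> k1 k2 [e1 e2]; apply: val_inj.
have ib : injective (fun k : 'I_n.+1 => keyIn (inr (inr k) : TT n)).
  by move=> k1 k2 [e1 e2]; apply: val_inj.
case: i => [|j].
- apply: (le4 (a:=1) (b:=0) (c:=0) (d:=0)).
  + apply: (sum_keyL _ iu) => ?; exact: dem_l.
  + by apply: (sum_key0 _ ix) => -[k t] [].
  + by apply: (sum_key0 _ ia) => k [].
  + by apply: (sum_key0 _ ib) => k [].
  + lra.
case: (boolP (s == pk j)) => [/eqP es|ns].
- apply: (le4 (a:=0) (b:=0) (c:=1/2) (d:=1/2)).
  + by apply: (sum_key0 _ iu) => k [].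
  + apply: (sum_key0 _ ix) => -[k t] [/= e1 e2]; subst s.
    by move: (@sx_neq k t); rewrite e2 e1.
  + apply: (sum_keyR _ ia) => ?; exact: dem_r.
  + apply: (sum_keyR _ ib) => ?; exact: dem_r.
  + lra.
- apply: (le4 (a:=0) (b:=1) (c:=0) (d:=0)).
  + by apply: (sum_key0 _ iu) => k [].
  + apply: (sum_keyL _ ix) => ?; exact: dem_l.
  + apply: (sum_key0 _ ia) => k [/= e1 e2]; subst s.
    by move: ns; rewrite -e1 eqxx.
  + apply: (sum_key0 _ ib) => k [/= e1 e2]; subst s.
    by move: ns; rewrite -e1 eqxx.
  + lra.
Qed.

Lemma injx n : injective (fun p : 'I_n.+2 * 'I_n.+1 => keyOut (inl (inr p) : TT n)).
Proof.
move=> [k1 t1] [k2 t2] [/= e1 e2].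
have ek : k1 = k2.
  apply: val_inj => /=; move: e1; case: eqP => h1; case: eqP => h2 e1;
  have := ltn_ord k1; have := ltn_ord k2; lia.
by subst k2; rewrite (val_inj (sx_inj e2)).
Qed.
Lemma injxd n : injective (fun p : 'I_n.+2 * 'I_n.+1 => keyDst (inl (inr p) : TT n)).
Proof. exact: (@injx n). Qed.

Lemma sumOut n (c : nat * nat) : \sum_(t : TT n | keyOut t == c) dem_n t <= 3/2.
Proof.
rewrite sum4; case: c => i s.
have iu : injective (fun k : 'I_n.+2 => keyOut (inl (inl k) : TT n)).
  by move=> k1 k2 [e]; apply: val_inj.
have ix := @injx n.
have ia : injective (fun k : 'I_n.+2 => keyOut (inr (inl k) : TT n)).
  by move=> k1 k2 [e1 e2]; apply: val_inj.
have ib : injective (fun k : 'I_n.+1 => keyOut (inr (inr k) : TT n)).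
  by move=> k1 k2 [e1 e2]; apply: val_inj.
case: (boolP (i == n.+2)) => [/eqP ei|ni].
- apply: (le4 (a:=0) (b:=1) (c:=0) (d:=0)).
  + apply: (sum_key0 _ iu) => k [/= e1 e2]; exfalso; have := ltn_ord k; lia.
  + apply: (sum_keyL _ ix) => ?; exact: dem_l.
  + apply: (sum_key0 _ ia) => k [/= e1 e2]; exfalso; have := ltn_ord k; lia.
  + apply: (sum_key0 _ ib) => k [/= e1 e2]; exfalso; have := ltn_ord k; lia.
  + lra.
case: (boolP (s == i)) => [/eqP es|ns].
- subst s; apply: (le4 (a:=1) (b:=0) (c:=0) (d:=1/2)).
  + apply: (sum_keyL _ iu) => ?; exact: dem_l.
  + apply: (sum_key0 _ ix) => -[k t] [/= e1 e2]; exfalso; move: e1.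
    case: eqP => h1 e1; [lia|subst i; lia].
  + apply: (sum_key0 _ ia) => k [/= e1 e2]; exfalso; subst i.
    exact: (@pk_neq k).
  + apply: (sum_keyR _ ib) => ?; exact: dem_r.
  + lra.
case: (boolP (s == pk i)) => [/eqP es|ns2].
- subst s; apply: (le4 (a:=0) (b:=0) (c:=1/2) (d:=1/2)).
  + apply: (sum_key0 _ iu) => k [/= e1 e2]; exfalso; apply: (@pk_neq i).
    by rewrite -e2 e1.
  + apply: (sum_key0 _ ix) => -[k t] [/= e1 e2]; exfalso; move: e1.
    case: eqP => h1 e1; [lia|subst i; exact: (@sx_neq k t)].
  + apply: (sum_keyR _ ia) => ?; exact: dem_r.
  + apply: (sum_keyR _ ib) => ?; exact: dem_r.
  + lra.
- apply: (le4 (a:=0) (b:=1) (c:=0) (d:=1/2)).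
  + apply: (sum_key0 _ iu) => k [/= e1 e2]; exfalso; move: ns; rewrite -e1 -e2 eqxx.
    by [].
  + apply: (sum_keyL _ ix) => ?; exact: dem_l.
  + apply: (sum_key0 _ ia) => k [/= e1 e2]; exfalso; subst i s.
    by move: ns2; rewrite eqxx.
  + apply: (sum_keyR _ ib) => ?; exact: dem_r.
  + lra.
Qed.

Lemma sumDst n (c : nat * nat) : \sum_(t : TT n | keyDst t == c) dem_n t <= 1.
Proof.
rewrite sum4; case: c => i s.
have iu : injective (fun k : 'I_n.+2 => keyDst (inl (inl k) : TT n)).
  by move=> k1 k2 [e]; apply: val_inj.
have ix := @injxd n.
have ia : injective (fun k : 'I_n.+2 => keyDst (inr (inl k) : TT n)).
  by move=> k1 k2 [e1 e2]; apply: val_inj.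
have ib : injective (fun k : 'I_n.+1 => keyDst (inr (inr k) : TT n)).
  by move=> k1 k2 [e1]; apply: val_inj.
case: (boolP (i == n.+2)) => [/eqP ei|ni].
- apply: (le4 (a:=0) (b:=1) (c:=0) (d:=0)).
  + apply: (sum_key0 _ iu) => k [/= e1 e2]; exfalso; have := ltn_ord k; lia.
  + apply: (sum_keyL _ ix) => ?; exact: dem_l.
  + apply: (sum_key0 _ ia) => k [/= e1 e2]; exfalso; have := ltn_ord k; lia.
  + apply: (sum_key0 _ ib) => k [/= e1 e2]; exfalso; have := ltn_ord k; lia.
  + lra.
case: (boolP (s == i)) => [/eqP es|ns].
- subst s; apply: (le4 (a:=1) (b:=0) (c:=0) (d:=0)).
  + apply: (sum_keyL _ iu) => ?; exact: dem_l.
  + apply: (sum_key0 _ ix) => -[k t] [/= e1 e2]; exfalso; move: e1.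
    case: eqP => h1 e1; [lia|subst i; lia].
  + apply: (sum_key0 _ ia) => k [/= e1 e2]; exfalso; subst i.
    exact: (@pk_neq k).
  + apply: (sum_key0 _ ib) => k [/= e1 e2]; exfalso; subst i.
    exact: (@pk_neq k.+1).
  + lra.
case: (boolP (s == pk i)) => [/eqP es|ns2].
- subst s; apply: (le4 (a:=0) (b:=0) (c:=1/2) (d:=1/2)).
  + apply: (sum_key0 _ iu) => k [/= e1 e2]; exfalso; apply: (@pk_neq i).
    by rewrite -e2 e1.
  + apply: (sum_key0 _ ix) => -[k t] [/= e1 e2]; exfalso; move: e1.
    case: eqP => h1 e1; [lia|subst i; exact: (@sx_neq k t)].
  + apply: (sum_keyR _ ia) => ?; exact: dem_r.
  + apply: (sum_keyR _ ib) => ?; exact: dem_r.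
  + lra.
- apply: (le4 (a:=0) (b:=1) (c:=0) (d:=0)).
  + apply: (sum_key0 _ iu) => k [/= e1 e2]; exfalso; move: ns; rewrite -e1 -e2 eqxx.
    by [].
  + apply: (sum_keyL _ ix) => ?; exact: dem_l.
  + apply: (sum_key0 _ ia) => k [/= e1 e2]; exfalso; subst i s.
    by move: ns2; rewrite eqxx.
  + apply: (sum_key0 _ ib) => k [/= e1 e2]; exfalso; subst i s.
    by move: ns2; rewrite eqxx.
  + lra.
Qed.

Definition HypI n (rho : TT n -> 'I_n.+2) := forall t1 t2, t1 != t2 -> fin_n t1 = fin_n t2 ->
  3/2 <= dem_n t1 + dem_n t2 -> rho t1 != rho t2.
Definition HypO n (rho : TT n -> 'I_n.+2) := forall t1 t2, t1 != t2 -> out_n t1 = out_n t2 ->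
  3/2 <= dem_n t1 + dem_n t2 -> rho t1 != rho t2.

Lemma HIuse n (rho : TT n -> 'I_n.+2) (HI : HypI rho) t1 t2 : rho t1 = rho t2 ->
  t1 != t2 -> fin_n t1 = fin_n t2 -> 3/2 <= dem_n t1 + dem_n t2 -> False.
Proof. by move=> e a b c; move: (HI _ _ a b c); rewrite e eqxx. Qed.
Lemma HOuse n (rho : TT n -> 'I_n.+2) (HO : HypO rho) t1 t2 : rho t1 = rho t2 ->
  t1 != t2 -> out_n t1 = out_n t2 -> 3/2 <= dem_n t1 + dem_n t2 -> False.
Proof. by move=> e a b c; move: (HO _ _ a b c); rewrite e eqxx. Qed.

Lemma stepJ n (rho : TT n -> 'I_n.+2) (HI : HypI rho) (k : 'I_n.+1) :
  rho (inr (inl (widen_ord (leqnSn _) k))) = rho (inr (inr k)).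
Proof.
set kw := widen_ord _ k.
apply/eqP; apply/negPn/negP => hab.
pose h (z : 'I_n.+1 + bool) : 'I_n.+2 :=
  match z with inl t => rho (inl (inr (kw, t))) | inr true => rho (inr (inl kw))
  | inr false => rho (inr (inr k)) end.
have hi : injective h.
  move=> [t1|[]] [t2|[]] //= e.
  - congr inl; apply/eqP; apply/negPn/negP => ne.
    apply: (HIuse HI e); [|by []|rewrite !(dem_l, dem_r); lra].
    by apply: contra ne => /eqP [->].
  - by exfalso; apply: (HIuse HI e); [by []|by []|rewrite !(dem_l, dem_r); lra].
  - by exfalso; apply: (HIuse HI e); [by []|by []|rewrite !(dem_l, dem_r); lra].
  - by exfalso; apply: (HIuse HI e); [by []|by []|rewrite !(dem_l, dem_r); lra].
  - by move: hab; rewrite e eqxx.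
  - by exfalso; apply: (HIuse HI e); [by []|by []|rewrite !(dem_l, dem_r); lra].
  - by move: hab; rewrite e eqxx.
have := @leq_card _ _ h hi; rewrite card_sum !card_ord card_bool; lia.
Qed.

Ltac dm := rewrite ?dem_l ?dem_r; lra.

Lemma stepO n (rho : TT n -> 'I_n.+2) (HO : HypO rho) (k : 'I_n.+1) :
  rho (inr (inl (inord k.+1 : 'I_n.+2))) = rho (inr (inr k)).
Proof.
set jj : 'I_n.+2 := inord k.+1.
have vj : nat_of_ord jj = k.+1 by rewrite /jj inordK // ltnS.
apply/eqP; apply/negPn/negP => hab.
pose h (z : 'I_n.+1 + bool) : 'I_n.+2 :=
  match z with
  | inl t => if sx jj t == jj then rho (inl (inl jj)) else rho (inl (inr (jj, t)))
  | inr true => rho (inr (inl jj))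
  | inr false => rho (inr (inr k)) end.
have hi : injective h.
  move=> [t1|[]] [t2|[]] /=.
  - case: ifP => h1; case: ifP => h2 e.
    + congr inl; apply: val_inj; apply: (@sx_inj jj); by rewrite (eqP h1) (eqP h2).
    + exfalso; apply: (HOuse HO e); [by []|by rewrite /= h2|dm].
    + exfalso; apply: (HOuse HO e); [by []|by rewrite /= h1|dm].
    + congr inl; apply/eqP; apply/negPn/negP => ne.
      apply: (HOuse HO e); [|by rewrite /= h1 h2|dm].
      by apply: contra ne => /eqP [->].
  - case: ifP => h1 e; exfalso; apply: (HOuse HO e); [by []|by rewrite /= ?h1|dm|by []|by rewrite /= ?h1|dm].
  - case: ifP => h1 e; exfalso; apply: (HOuse HO e); [by []|by rewrite /= ?h1 vj|dm|by []|by rewrite /= ?h1 vj|dm].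
  - case: ifP => h1 e; exfalso; apply: (HOuse HO e); [by []|by rewrite /= ?h1|dm|by []|by rewrite /= ?h1|dm].
  - by [].
  - by move=> e; move: hab; rewrite e eqxx.
  - case: ifP => h1 e; exfalso; apply: (HOuse HO e); [by []|by rewrite /= ?h1 vj|dm|by []|by rewrite /= ?h1 vj|dm].
  - by move=> e; move: hab; rewrite e eqxx.
  - by [].
have := @leq_card _ _ h hi; rewrite card_sum !card_ord card_bool; lia.
Qed.

Lemma chain n (rho : TT n -> 'I_n.+2) (HI : HypI rho) (HO : HypO rho) k :
  (k < n.+2)%N -> rho (inr (inl (inord k))) = rho (inr (inl (inord 0))).
Proof.
elim: k => [//|k IH] hk.
have hk' : (k < n.+1)%N by [].
set kk : 'I_n.+1 := inord k.
have vk : nat_of_ord kk = k by rewrite /kk inordK.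
have := stepO HO kk; rewrite vk => ->.
rewrite -(stepJ HI kk) -IH; last by apply: ltnW.
congr (rho (inr (inl _))); apply: val_inj => /=; rewrite vk inordK //; exact: ltnW.
Qed.

Lemma final n (rho : TT n -> 'I_n.+2) (HI : HypI rho) (HO : HypO rho) : False.
Proof.
pose h (z : option 'I_n.+2) : 'I_n.+2 :=
  match z with None => rho (inr (inl (inord 0))) | Some k => rho (inl (inl k)) end.
have hi : injective h.
  move=> [k1|] [k2|] /=.
  - move=> e; congr Some; apply/eqP; apply/negPn/negP => ne.
    apply: (HIuse HI e); [by apply: contra ne => /eqP [->]|by []|dm].
  - move=> e; exfalso; rewrite -(chain HI HO (ltn_ord k1)) inord_val in e.
    apply: (HOuse HO e); [by []|by []|dm].
  - move=> e; exfalso; rewrite -(chain HI HO (ltn_ord k2)) inord_val in e.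
    apply: (HOuse HO e); [by []|by []|dm].
  - by [].
have := @leq_card _ _ h hi; rewrite card_option card_ord; lia.
Qed.

Definition FF n r (i : 'I_#|TT n|) : flow n.+2 r.+1 := G r (enum_val i).
Definition r0 n : routing n.+2 #|TT n| := [ffun i => rho0 (enum_val i)].

Lemma bigmax_ge (I : finType) (f : I -> rat) i : f i <= \big[Num.max/0]_j f j.
Proof. by rewrite (bigD1 i) //= le_max lexx. Qed.

Lemma in_le_cong (N R m : nat) (F : 'I_m -> flow N R) (r : routing N m) i mm :
  load_in F r i mm <= congestion F r.
Proof.
rewrite /congestion; apply: le_trans (bigmax_ge _ i).
apply: le_trans (bigmax_ge _ mm); by rewrite le_max lexx.
Qed.
Lemma out_le_cong (N R m : nat) (F : 'I_m -> flow N R) (r : routing N m) i mm :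
  load_out F r i mm <= congestion F r.
Proof.
rewrite /congestion; apply: le_trans (bigmax_ge _ i).
apply: le_trans (bigmax_ge _ mm); by rewrite le_max lexx orbT.
Qed.

Lemma dem_pos n (t : TT n) : 0 < dem_n t.
Proof. case: t => z; rewrite ?dem_l ?dem_r; lra. Qed.

Lemma FFE n r (t : TT n) : FF r (enum_rank t) = G r t.
Proof. by rewrite /FF enum_rankK. Qed.

Lemma conflict_in n r (rt : routing n.+2 #|TT n|) (t1 t2 : TT n) :
  t1 != t2 -> fin_n t1 = fin_n t2 -> rt (enum_rank t1) = rt (enum_rank t2) ->
  dem_n t1 + dem_n t2 <= load_in (@FF n r) rt (fin (G r t1)) (rt (enum_rank t1)).
Proof.
move=> ne ef er; rewrite /load_in (bigD1 (enum_rank t1)); last by rewrite FFE !eqxx.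
rewrite (bigD1 (enum_rank t2)); last first.
  rewrite FFE er eqxx andbT /G /= ef eqxx /=.
  by apply: contra ne => /eqP /enum_rank_inj ->.
rewrite /= !enum_rankK addrA lerDl; apply: sumr_ge0 => f _; exact: ltW (dem_pos _).
Qed.
Lemma conflict_out n r (rt : routing n.+2 #|TT n|) (t1 t2 : TT n) :
  t1 != t2 -> out_n t1 = out_n t2 -> rt (enum_rank t1) = rt (enum_rank t2) ->
  dem_n t1 + dem_n t2 <= load_out (@FF n r) rt (fout (G r t1)) (rt (enum_rank t1)).
Proof.
move=> ne ef er; rewrite /load_out (bigD1 (enum_rank t1)); last by rewrite FFE !eqxx.
rewrite (bigD1 (enum_rank t2)); last first.
  rewrite FFE er eqxx andbT /G /= ef eqxx /=.
  by apply: contra ne => /eqP /enum_rank_inj ->.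
rewrite /= !enum_rankK addrA lerDl; apply: sumr_ge0 => f _; exact: ltW (dem_pos _).
Qed.

Lemma lower n r (rt : routing n.+2 #|TT n|) : 3/2 <= congestion (@FF n r) rt.
Proof.
rewrite leNgt; apply/negP => hc.
apply: (@final n (fun t => rt (enum_rank t))).
- move=> t1 t2 ne ef hd; apply/eqP => er.
  have := le_trans hd (le_trans (conflict_in r ne ef er) (in_le_cong _ _ _ _)).
  by move=> /le_lt_trans /(_ hc); rewrite ltxx.
- move=> t1 t2 ne ef hd; apply/eqP => er.
  have := le_trans hd (le_trans (conflict_out r ne ef er) (out_le_cong _ _ _ _)).
  by move=> /le_lt_trans /(_ hc); rewrite ltxx.
Qed.

Lemma load_in_r0 n r (hR : (n.+3 <= r.+1)%N) (i : 'I_r.+1) (mm : 'I_n.+2) :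
  load_in (@FF n r) (r0 n) i mm = \sum_(t : TT n | keyIn t == (nat_of_ord i, nat_of_ord mm)) dem_n t.
Proof.
rewrite /load_in -(sumT (fun t : TT n => keyIn t == _) (@dem_n n)).
apply: eq_big => f; last by [].
by rewrite ffunE /FF fin_eq // rho_eq xpair_eqE.
Qed.
Lemma load_out_r0 n r (hR : (n.+3 <= r.+1)%N) (i : 'I_r.+1) (mm : 'I_n.+2) :
  load_out (@FF n r) (r0 n) i mm = \sum_(t : TT n | keyOut t == (nat_of_ord i, nat_of_ord mm)) dem_n t.
Proof.
rewrite /load_out -(sumT (fun t : TT n => keyOut t == _) (@dem_n n)).
apply: eq_big => f; last by [].
by rewrite ffunE /FF out_eq // rho_eq xpair_eqE.
Qed.

Lemma upper n r (hR : (n.+3 <= r.+1)%N) : congestion (@FF n r) (r0 n) <= 3/2.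
Proof.
have h0 : 0 <= 3/2 :> rat by lra.
have hm : forall x y : rat, x <= 3/2 -> y <= 3/2 -> Num.max x y <= 3/2.
  by move=> x y hx hy; rewrite ge_max hx hy.
rewrite /congestion; apply: (big_ind (fun x => x <= 3/2)) => // i _.
apply: (big_ind (fun x => x <= 3/2)) => // mm _.
apply: hm; first rewrite load_in_r0 //; last rewrite load_out_r0 //.
- apply: le_trans (sumIn _ _) _; lra.
- exact: sumOut.
Qed.

Lemma valid n r (hR : (n.+3 <= r.+1)%N) : valid_flows (@FF n r).
Proof.
split; [|split].
- move=> f; exact: dem_pos.
- move=> i k.
  rewrite (_ : \sum_(f | _) _ = \sum_(t : TT n | keyIn t == (nat_of_ord i, nat_of_ord k)) dem_n t);
    first exact: sumIn.
  rewrite -(sumT (fun t : TT n => keyIn t == _) (@dem_n n)).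
  apply: eq_big => f; last by [].
  by rewrite /FF fin_eq // srv_eq xpair_eqE.
- move=> i k.
  rewrite (_ : \sum_(f | _) _ = \sum_(t : TT n | keyDst t == (nat_of_ord i, nat_of_ord k)) dem_n t);
    first exact: sumDst.
  rewrite -(sumT (fun t : TT n => keyDst t == _) (@dem_n n)).
  apply: eq_big => f; last by [].
  by rewrite /FF out_eq // dst_eq xpair_eqE.
Qed.

Lemma OPT_eq n r (hR : (n.+3 <= r.+1)%N) : OPT (@FF n r) = 3/2.
Proof.
rewrite /OPT; case: pickP => [r1 _|none]; last by have := none (r0 n).
apply/eqP; rewrite eq_le; apply/andP; split.
- rewrite (bigD1 (r0 n)) //= ge_min; apply/orP; left; exact: upper.
- apply: (big_ind (fun x => 3/2 <= x)); first exact: lower.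
  + by move=> x y hx hy; rewrite le_min hx hy.
  + by move=> rr _; exact: lower.
Qed.

Unset Implicit Arguments.

Theorem mainTheorem2 (N R : nat) (hN : (2 <= N)%N) (hR : (N.+1 <= R)%N) :
  exists (m : nat) (F : 'I_m -> flow N R),
    valid_flows F /\
    (forall f, dem (F f) = 1 \/ dem (F f) = 1 / 2) /\
    OPT F = 3 / 2.
Proof.
move: hN hR; case: N => [|[|n]] // _; case: R => [|r] // hR.
exists #|TT n|, (@FF n r); split; [exact: valid|split; last exact: OPT_eq].
move=> f; rewrite /FF; case: (enum_val f) => z; [left|right]; reflexivity.
Qed.
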